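(* Let $(E,\mathcal{E},m)$ be a $\sigma$-finite measure space and let $P$ be a stochastic operator on $L^1(E,\mathcal{E},m)$ which is uniquely mean ergodic with invariant density $f_*$. If a nonnegative measurable function $\tilde f_*$ is subinvariant for $P$ and $m(\operatorname{supp} f_*\cap\{x:\tilde f_*(x)<\infty\})>0$, then $\tilde f_*\in L^1$.
   Context: $L^1_+$ denotes the nonnegative elements of $L^1$, and $D(m)=\{f\in L^1_+:\|f\|=1\}$ is the set of densities. A linear operator $P$ on $L^1$ is stochastic if $P(D(m))\subseteq D(m)$. A substochastic (positive contraction) operator $P$ is extended to nonnegative measurable functions by $Pf=\sup_n Pf_n$ whenever $f=\sup_n f_n$ with $0\le f_n\le f_{n+1}$, $f_n\in L^1_+$ (the value may be $+\infty$). A nonnegative measurable $f$ is subinvariant for $P$ if $Pf\le f$. $P$ is uniquely mean ergodic if there is an invariant density $f_*$ ($Pf_*=f_*$) with $\lim_{N\to\infty}\frac1N\sum_{n=0}^{N-1}P^nf=f_*\|f\|$ for all $f\in L^1_+$. The support of $f$ is $\operatorname{supp} f=\{x: f(x)\neq0\}$ (up to null sets). *)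

(* Defs.v *)
From HB Require Import structures.
From mathcomp Require Import all_boot all_order all_algebra.
From mathcomp Require Import all_classical all_reals all_analysis measurable_realfun.
Set Implicit Arguments. Unset Strict Implicit. Unset Printing Implicit Defensive.
Import Order.TTheory GRing.Theory Num.Theory.
Local Open Scope classical_set_scope.
Local Open Scope ring_scope.

(* Elements of L^1(E, mu) are represented by their real-valued representatives
   f : T -> R with mu.-integrable setT (EFin \o f); equality in L^1 is a.e.
   equality.  An operator on L^1 is represented by a map P : (T -> R) -> (T -> R)
   which is only meaningful on integrable functions. *)

Section L1ops.
Context d (T : measurableType d) (R : realType) (mu : {measure set T -> \bar R}).

Definition L1 (f : T -> R) : Prop := mu.-integrable setT (EFin \o f).

Definition L1norm (f : T -> R) : R := fine (\int[mu]_x (`|f x|)%:E).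

Definition L1pos (f : T -> R) : Prop := L1 f /\ {ae mu, forall x, 0 <= f x}.

Definition density (f : T -> R) : Prop := L1pos f /\ L1norm f = 1.

Definition L1_linear_operator (P : (T -> R) -> (T -> R)) : Prop :=
  [/\ (forall f, L1 f -> L1 (P f)),
      (forall f g, L1 f -> L1 g -> f = g %[ae mu] -> P f = P g %[ae mu]) &
      (forall (a b : R) f g, L1 f -> L1 g ->
          P (fun x => a * f x + b * g x) = (fun x => a * P f x + b * P g x) %[ae mu])].

Definition stochastic (P : (T -> R) -> (T -> R)) : Prop :=
  L1_linear_operator P /\ (forall f, density f -> density (P f)).

Definition cesaro (P : (T -> R) -> (T -> R)) (N : nat) (f : T -> R) : T -> R :=
  fun x => N%:R^-1 * \sum_(n < N) iter n P f x.

Definition uniquely_mean_ergodic_with (P : (T -> R) -> (T -> R)) (fstar : T -> R) : Prop :=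
  [/\ density fstar,
      P fstar = fstar %[ae mu] &
      (forall f, L1pos f ->
         (fun N : nat => L1norm (fun x => cesaro P N.+1 f x - fstar x * L1norm f))
            @ \oo --> 0)].

(* Extension of P to nonnegative measurable functions: for an increasing sequence
   fs of elements of L^1_+, the value at x of sup_n P (fs n). *)
Definition ext_sup (P : (T -> R) -> (T -> R)) (fs : nat -> T -> R) (x : T) : \bar R :=
  ereal_sup (range (fun n => (P (fs n) x)%:E)).

Definition approx_seq (fs : nat -> T -> R) (f : T -> \bar R) : Prop :=
  [/\ (forall n, L1pos (fs n)),
      (forall n, {ae mu, forall x, fs n x <= fs n.+1 x}) &
      {ae mu, forall x, ereal_sup (range (fun n => (fs n x)%:E)) = f x}].

(* f (nonnegative measurable, possibly infinite) is subinvariant: P f <= f, where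
   P f := sup_n P f_n for an increasing sequence f_n in L^1_+ with f = sup_n f_n
   (the value does not depend on the chosen sequence). *)
Definition subinvariant (P : (T -> R) -> (T -> R)) (f : T -> \bar R) : Prop :=
  exists fs, approx_seq fs f /\ {ae mu, forall x, (ext_sup P fs x <= f x)%E}.

End L1ops.

(* Main.v *)
Require Import Defs.
From HB Require Import structures.
From mathcomp Require Import all_boot all_order all_algebra.
From mathcomp Require Import all_classical all_reals all_analysis measurable_realfun.
From mathcomp Require Import lra.
Import Order.TTheory GRing.Theory Num.Theory.
Local Open Scope classical_set_scope.
Local Open Scope ring_scope.
Set Implicit Arguments. Unset Strict Implicit.

Lemma min_cvg (R : realType) (a : R) (v : nat -> R) (S : \bar R) :
  (forall n, v n <= v n.+1) -> ereal_sup (range (fun n => (v n)%:E)) = S ->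
  (a%:E <= S)%E -> (fun n => (Num.min a (v n))%:E) @ \oo --> a%:E.
Proof.
move=> Hv HS aS; apply: cvg_EFin; first by near=> n.
apply/cvgrPdist_lt => eps eps0.
have [n0 Hn0] : exists n0, a - eps < v n0.
  apply: contrapT => H.
  have H' : forall n, v n <= a - eps.
    by move=> n; rewrite leNgt; apply/negP => Hn; apply: H; exists n.
  have : (S <= (a - eps)%:E)%E.
    by rewrite -HS; apply: ge_ereal_sup => _ [n _ <-]; rewrite lee_fin.
  move=> /(le_trans aS); rewrite lee_fin; lra.
near=> n.
have nn0 : (n0 <= n)%N by near: n; exists n0.
have := (nondecreasing_seqP v).1 Hv _ _ nn0 => vn.
rewrite /=; have [av|va] := leP a (v n).
  by rewrite subrr normr0.
rewrite ger0_norm; lra.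
Unshelve. all: by end_near. Qed.

Section Aux.
Context d (T : measurableType d) (R : realType) (mu : {measure set T -> \bar R}).

Lemma aeand (A B : T -> Prop) : {ae mu, forall x, A x} ->
  {ae mu, forall x, B x} -> {ae mu, forall x, A x /\ B x}.
Proof. by move=> a b; apply: filterS2 a b => x. Qed.

Lemma L1_meas (f : T -> R) : L1 mu f -> measurable_fun setT f.
Proof. by rewrite /L1 => /integrableP[/measurable_EFinP]. Qed.

Lemma L1lin (a b : R) (f g : T -> R) : L1 mu f -> L1 mu g ->
  L1 mu (fun x => a * f x + b * g x).
Proof.
move=> Hf Hg; rewrite /L1.
have := integrableD measurableT (integrableZl measurableT a Hf)
  (integrableZl measurableT b Hg).
suff -> : (EFin \o (fun x => a * f x + b * g x)) =
  ((fun x => a%:E * (EFin \o f) x) \+ (fun x => b%:E * (EFin \o g) x))%E by [].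
by apply/funext => x /=; rewrite EFinD !EFinM.
Qed.

Lemma L1normE (f : T -> R) : L1 mu f ->
  (L1norm mu f)%:E = (\int[mu]_x (`|f x|)%:E)%E.
Proof.
rewrite /L1 => /integrableP[_ H]; rewrite fineK // ge0_fin_numE; last exact: integral_ge0.
exact: H.
Qed.

Lemma L1norm_ge0 (f : T -> R) : 0 <= L1norm mu f.
Proof. by apply: fine_ge0; apply: integral_ge0. Qed.


Lemma L1Z (k : R) (f : T -> R) : L1 mu f -> L1 mu (fun x => k * f x).
Proof.
move=> Hf; have := L1lin k 0 Hf Hf.
by rewrite (_ : (fun x => k * f x + 0 * f x) = (fun x => k * f x)) //;
  apply/funext => x; rewrite mul0r addr0.
Qed.

Lemma L1sub (f g : T -> R) : L1 mu f -> L1 mu g -> L1 mu (fun x => f x - g x).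
Proof.
move=> Hf Hg; have := L1lin 1 (-1) Hf Hg.
by rewrite (_ : (fun x => 1 * f x + -1 * g x) = (fun x => f x - g x)) //;
  apply/funext => x; rewrite mul1r mulN1r.
Qed.

Lemma L1Zr (k : R) (f : T -> R) : L1 mu f -> L1 mu (fun x => f x * k).
Proof.
move=> Hf; have := L1Z k Hf.
by rewrite (_ : (fun x => k * f x) = (fun x => f x * k)) //;
  apply/funext => x; rewrite mulrC.
Qed.

Lemma L1_abs_meas (f : T -> R) : L1 mu f ->
  measurable_fun setT (fun x => (`|f x|)%:E).
Proof.
move=> Hf; apply/measurable_EFinP; exact: measurableT_comp (L1_meas Hf).
Qed.

Lemma norm_ae (f g : T -> R) : L1 mu f -> L1 mu g ->
  {ae mu, forall x, f x = g x} -> L1norm mu f = L1norm mu g.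
Proof.
move=> Hf Hg fg; rewrite /L1norm (ae_eq_integral (fun x => (`|g x|)%:E)) //.
- exact: L1_abs_meas.
- exact: L1_abs_meas.
- by apply: filterS fg => x ->.
Qed.

Lemma norm0 (f : T -> R) : L1 mu f -> L1norm mu f = 0 ->
  {ae mu, forall x, f x = 0}.
Proof.
move=> Hf H0.
have H : (\int[mu]_x (`|f x|)%:E = 0)%E by rewrite -L1normE // H0.
have mf : measurable_fun setT (EFin \o f) by apply/measurable_EFinP; exact: L1_meas.
have := (ae_eq_integral_abs mu measurableT mf).1 H.
by apply: filterS => x /(_ I) [].
Qed.

Lemma normZ (k : R) (f : T -> R) : L1 mu f ->
  L1norm mu (fun x => k * f x) = `|k| * L1norm mu f.
Proof.
move=> Hf; rewrite /L1norm.
under eq_integral do rewrite normrM EFinM.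
rewrite ge0_integralZl //; last exact: L1_abs_meas.
by rewrite -(L1normE Hf) -EFinM.
Qed.

Lemma le_limit (F : T -> \bar R) (h : T -> R) (u : nat -> T -> R) :
  measurable_fun setT F -> measurable_fun setT h ->
  (forall N, measurable_fun setT (u N)) ->
  (forall N, {ae mu, forall x, ((u N x)%:E <= F x)%E}) ->
  (forall e : R, 0 < e -> exists N,
     (\int[mu]_x (`|h x - u N x|)%:E <= e%:E)%E) ->
  {ae mu, forall x, ((h x)%:E <= F x)%E}.
Proof.
move=> mF mh mu_u uF hu.
pose phi := fun x => maxe ((h x)%:E - F x)%E 0%E.
have mphi : measurable_fun setT phi.
  apply: measurable_maxe => //.
  by apply: emeasurable_funB => //; exact/measurable_EFinP.
have phi0 x : (0 <= phi x)%E by rewrite /phi le_max lexx orbT.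
have bnd N : (\int[mu]_x phi x <= \int[mu]_x (`|h x - u N x|)%:E)%E.
  apply: ae_ge0_le_integral => //.
  - by apply/measurable_EFinP; apply: measurableT_comp => //;
      apply: measurable_funB.
  - apply: filterS (uF N) => x ux _.
    rewrite /phi ge_max lee_fin normr_ge0 andbT.
    move: ux; case: (F x) => [r| |] //=.
    + rewrite !lee_fin => ur.
      by rewrite (le_trans _ (ler_norm _)) // lerB.
    + by rewrite leNye.
have I0 : (\int[mu]_x phi x = 0)%E.
  apply/eqP; rewrite eq_le integral_ge0 // andbT.
  apply/lee_addgt0Pr => e e0; rewrite add0e.
  have [N HN] := hu e e0; exact: le_trans (bnd N) HN.
have : (\int[mu]_x `|phi x| = 0)%E.
  by rewrite (eq_integral phi) // => x _; rewrite gee0_abs.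
move=> H; have := (ae_eq_integral_abs _ measurableT mphi).1 H.
apply: filterS => x /(_ I) p0.
move: p0; rewrite /phi => /eqP; rewrite eq_le => /andP[+ _].
by rewrite ge_max => /andP[+ _]; rewrite sube_le0.
Qed.

Section Pos.
Variable P : (T -> R) -> (T -> R).
Hypothesis HP : L1_linear_operator mu P.
Hypothesis Hst : forall f, density mu f -> density mu (P f).

Lemma P_L1 f : L1 mu f -> L1 mu (P f).
Proof. by case: HP => H _ _; apply: H. Qed.

Lemma P_ae f g : L1 mu f -> L1 mu g -> {ae mu, forall x, f x = g x} ->
  {ae mu, forall x, P f x = P g x}.
Proof.
case: HP => _ H _ Hf Hg fg.
have : f = g %[ae mu] by apply: filterS fg => x ->.
by move/(H f g Hf Hg); apply: filterS => x /(_ I).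
Qed.

Lemma P_lin (a b : R) f g : L1 mu f -> L1 mu g ->
  {ae mu, forall x, P (fun y => a * f y + b * g y) x = a * P f x + b * P g x}.
Proof.
case: HP => _ _ H Hf Hg.
by have := H a b f g Hf Hg; apply: filterS => x /(_ I).
Qed.

Lemma Ppos f : L1pos mu f -> L1pos mu (P f) /\ L1norm mu (P f) = L1norm mu f.
Proof.
move=> [Lf f0]; have LPf := P_L1 Lf.
have := L1norm_ge0 f; rewrite le_eqVlt => /predU1P[c0|cpos].
- have fae := norm0 Lf (esym c0).
  have L0 := L1lin 0 0 Lf Lf.
  have fae' : {ae mu, forall x, f x = 0 * f x + 0 * f x}.
    by apply: filterS fae => x ->; rewrite mul0r addr0.
  have e1 := P_ae Lf L0 fae'.
  have e2 := P_lin 0 0 Lf Lf.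
  have Pf0 : {ae mu, forall x, P f x = 0}.
    by apply: filterS2 e1 e2 => x -> ->; rewrite !mul0r addr0.
  have L00 : L1 mu (fun _ : T => 0 : R) by exact: integrable0.
  split; first by split=> //; apply: filterS Pf0 => x ->.
  rewrite -c0 (norm_ae LPf L00 Pf0) /L1norm.
  by under eq_integral do rewrite normr0; rewrite integral0.
- set c := L1norm mu f in cpos *.
  pose h := fun x => c^-1 * f x + 0 * f x.
  have Lh : L1 mu h := L1lin _ _ Lf Lf.
  have hE : h = (fun x => c^-1 * f x).
    by apply/funext => x; rewrite /h mul0r addr0.
  have Dh : density mu h.
    split; first split => //.
      apply: filterS f0 => x fx; rewrite hE mulr_ge0 //.
      by rewrite invr_ge0 ltW.
    by rewrite hE normZ // ger0_norm ?invr_ge0 ?(ltW cpos) // mulVf // gt_eqF.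
  have [[LPh Ph0] nPh] := Hst Dh.
  have e := P_lin c^-1 0 Lf Lf.
  have PfE : {ae mu, forall x, P f x = c * P h x}.
    apply: filterS e => x; rewrite -/h => ->.
    by rewrite mul0r addr0 mulrA mulfV ?mul1r // gt_eqF.
  split; first split => //.
    by apply: filterS2 PfE Ph0 => x -> hx; rewrite mulr_ge0 // ltW.
  rewrite (norm_ae LPf (L1Z c LPh) PfE) normZ // nPh mulr1.
  by rewrite ger0_norm // ltW.
Qed.

Lemma Pmono g h : L1 mu g -> L1 mu h -> {ae mu, forall x, h x <= g x} ->
  {ae mu, forall x, P h x <= P g x} /\
  (\int[mu]_x (`|P g x - P h x|)%:E = \int[mu]_x (`|g x - h x|)%:E)%E.
Proof.
move=> Lg Lh hg.
pose k := fun x => 1 * g x + (-1) * h x.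
have Lk : L1 mu k := L1lin _ _ Lg Lh.
have kE : k = (fun x => g x - h x).
  by apply/funext => x; rewrite /k mul1r mulN1r.
have Pk : L1pos mu k.
  by split => //; apply: filterS hg => x hx; rewrite kE subr_ge0.
have [[LPk Pk0] nPk] := Ppos Pk.
have e := P_lin 1 (-1) Lg Lh.
have e' : {ae mu, forall x, P k x = P g x - P h x}.
  by apply: filterS e => x; rewrite -/k mul1r mulN1r.
split.
  by apply: filterS2 e' Pk0 => x -> ; rewrite subr_ge0.
rewrite (ae_eq_integral (fun x => (`|P k x|)%:E)) //.
- by rewrite -L1normE // nPk L1normE // kE.
- apply/measurable_EFinP; apply: measurableT_comp => //.
  by apply: measurable_funB; apply: L1_meas; apply: P_L1.
- exact: L1_abs_meas.
- by rewrite /ae_eq; apply: filterS e' => x -> _.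
Qed.

Section Bound.
Variables (fs : nat -> T -> R) (F : T -> \bar R).
Hypothesis mF : measurable_fun setT F.
Hypothesis Hfs : approx_seq mu fs F.
Hypothesis Hsub : {ae mu, forall x, (ext_sup P fs x <= F x)%E}.

Lemma fsL n : L1pos mu (fs n).
Proof. by case: Hfs. Qed.

Lemma fs_le n : {ae mu, forall x, ((fs n x)%:E <= F x)%E}.
Proof.
case: Hfs => _ _ H3; apply: filterS H3 => x <-.
by apply: ereal_sup_ubound; exists n.
Qed.

Lemma Pfs_le n : {ae mu, forall x, ((P (fs n) x)%:E <= F x)%E}.
Proof.
apply: filterS Hsub => x; apply: le_trans.
by apply: ereal_sup_ubound; exists n.
Qed.

Lemma Pbound g : L1pos mu g -> {ae mu, forall x, ((g x)%:E <= F x)%E} ->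
  {ae mu, forall x, ((P g x)%:E <= F x)%E}.
Proof.
case=> Lg g0 gF.
pose gm n := fun x => Num.min (g x) (fs n x).
have mgm n : measurable_fun setT (gm n).
  by apply: measurable_minr; [exact: L1_meas Lg|exact: L1_meas (fsL n).1].
have Lgm n : L1 mu (gm n).
  have Lsum : L1 mu (fun x => 1 * `|g x| + 1 * `|fs n x|).
    by apply: L1lin; [exact: integrable_abse Lg|exact: integrable_abse (fsL n).1].
  apply: (le_integrable measurableT _ _ Lsum).
    exact/measurable_EFinP.
  move=> x _ /=; rewrite lee_fin !mul1r [X in _ <= X]ger0_norm ?addr_ge0 //.
  rewrite /gm; have [ab|ab] := leP (g x) (fs n x).
    by rewrite lerDl.
  by rewrite lerDr.
have gmg n : {ae mu, forall x, gm n x <= g x}.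
  by apply: aeW => x; rewrite /gm ge_min lexx.
have gmf n : {ae mu, forall x, gm n x <= fs n x}.
  by apply: aeW => x; rewrite /gm ge_min lexx orbT.
apply: (le_limit (u := fun n => P (gm n))) => //.
- exact: L1_meas (P_L1 Lg).
- by move=> N; exact: L1_meas (P_L1 (Lgm N)).
- move=> N; have [H _] := Pmono (fsL N).1 (Lgm N) (gmf N).
  by apply: filterS2 H (Pfs_le N) => x a b; apply: le_trans b; rewrite lee_fin.
move=> e e0.
have f_f : {ae mu, forall x, setT x ->
    (fun n => (EFin \o gm n) x) @ \oo --> (EFin \o g) x}.
  case: Hfs => _ H2 H3.
  have A := ae_foralln H2.
  apply: filterS (aeand A (aeand H3 gF)) => x [a [b c]] _.
  exact: (min_cvg a b c).
have f_g : {ae mu, forall x n, setT x ->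
    (`|(EFin \o gm n) x| <= (EFin \o (fun y => (`|g y|)%R)) x)%E}.
  have A := ae_foralln (fun n => (fsL n).2).
  apply: filterS2 A g0 => x a b n _ /=.
  rewrite lee_fin ger0_norm ?le_min ?b ?a //.
  by rewrite ger0_norm // ge_min lexx.
have mgm' n : measurable_fun setT (EFin \o gm n) by exact/measurable_EFinP.
have mg' : measurable_fun setT (EFin \o g) by exact/measurable_EFinP/L1_meas.
have ig : mu.-integrable setT (EFin \o (fun y => (`|g y|)%R)) by exact: integrable_abse Lg.
have [_ Hcvg _] := dominated_convergence measurableT mgm' mg' f_f ig f_g.
set u := [sequence _]_n in Hcvg.
have Hf : fine \o u @ \oo --> 0 by exact: fine_cvg.
move/cvgr_dist_lt: Hf => /(_ e e0) H1.
have H2 := cvg_is_fine Hcvg.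
have H3 : \forall n \near \oo, `|0 - (fine \o u) n| < e /\ u n \is a fin_num.
  by apply: filterS2 H1 H2 => n a b.
have [N [HN1 HN2]] := filter_ex H3.
exists N; rewrite (Pmono Lg (Lgm N) (gmg N)).2.
have uE : u N = (\int[mu]_x (`|g x - gm N x|)%:E)%E.
  by rewrite /u /=; apply: eq_integral => x _; rewrite distrC.
rewrite -uE -(fineK HN2) lee_fin.
rewrite sub0r normrN in HN1; exact: le_trans (ler_norm _) (ltW HN1).
Qed.

Lemma iter_bound n k : L1pos mu (iter k P (fs n)) /\
  {ae mu, forall x, ((iter k P (fs n) x)%:E <= F x)%E}.
Proof.
elim: k => [|k [IH1 IH2]]; first by split; [exact: fsL|exact: fs_le].
split; first exact: (Ppos IH1).1.
exact: Pbound.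
Qed.

Lemma cesaro_L1 n N : L1 mu (Defs.cesaro P N (fs n)).
Proof.
apply: L1Z.
elim: N => [|N IH].
  have -> : (fun x => \sum_(k < 0) iter k P (fs n) x) = (fun _ => 0 : R).
    by apply/funext => x; rewrite big_ord0.
  exact: integrable0.
have -> : (fun x => \sum_(k < N.+1) iter k P (fs n) x) =
   (fun x => 1 * (\sum_(k < N) iter k P (fs n) x) + 1 * iter N P (fs n) x).
  by apply/funext => x; rewrite big_ord_recr !mul1r.
by apply: L1lin => //; exact: (iter_bound n N).1.1.
Qed.

Lemma cesaro_le n N : {ae mu, forall x, ((Defs.cesaro P N.+1 (fs n) x)%:E <= F x)%E}.
Proof.
have := ae_foralln (fun k => (iter_bound n k).2).
apply: filterS => x Hx.
move: (Hx 0%N); case Fx : (F x) => [r| |] //=; last by move=> _; rewrite leey.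
move=> _; rewrite lee_fin /Defs.cesaro ler_pdivrMl ?ltr0n //.
have -> : N.+1%:R * r = \sum_(k < N.+1) r by rewrite sumr_const card_ord mulr_natl.
apply: ler_sum => k _; have := Hx k; rewrite Fx lee_fin //.
Qed.

End Bound.
End Pos.
End Aux.

Unset Implicit Arguments.
Local Open Scope ereal_scope.

Theorem proposition2p1 (d : measure_display) (T : measurableType d) (R : realType)
  (mu : {measure set T -> \bar R}) (P : (T -> R) -> (T -> R))
  (fstar : T -> R) (ftilde : T -> \bar R) :
  sigma_finite setT mu ->
  stochastic mu P ->
  uniquely_mean_ergodic_with mu P fstar ->
  measurable_fun setT ftilde ->
  (forall x, 0 <= ftilde x) ->
  subinvariant mu P ftilde ->
  0 < mu ([set x | fstar x != 0%R] `&` [set x | ftilde x < +oo]) ->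
  mu.-integrable setT ftilde.
Proof.
move=> _ [HP Hst] [Dfs _ Herg] mF F0 [fs [Hfs Hsub]] Apos.
have Lfs : L1 mu fstar by case: Dfs => -[].
have B1 n : {ae mu, forall x, (fstar x * L1norm mu (fs n))%:E <= ftilde x}.
  apply: (le_limit (u := fun N => Defs.cesaro P N.+1 (fs n))) => //.
  - exact: measurable_funM (L1_meas Lfs) (measurable_cst _).
  - move=> N; apply: L1_meas; exact: (cesaro_L1 HP Hst mF Hfs Hsub).
  - move=> N; exact: (cesaro_le HP Hst mF Hfs Hsub).
  move=> e e0.
  have := Herg (fs n) (fsL Hfs n).
  move/cvgr_dist_lt => /(_ e e0) /filter_ex [N HN].
  exists N.
  set c := L1norm mu (fs n) in HN *.
  have L1N : L1 mu (fun x => Defs.cesaro P N.+1 (fs n) x - fstar x * c)%R.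
    by apply: L1sub; [exact: (cesaro_L1 HP Hst mF Hfs Hsub)|exact: L1Zr].
  rewrite (eq_integral (fun x => EFin (`|Defs.cesaro P N.+1 (fs n) x - fstar x * c|)%R)); last first.
    by move=> x _; rewrite distrC.
  rewrite -L1normE // lee_fin.
  by rewrite sub0r normrN in HN; exact: le_trans (ler_norm _) (ltW HN).
have f0 : {ae mu, forall x, (0 <= fstar x)%R} by case: Dfs => -[].
pose Q x := [/\ (forall n, (fstar x * L1norm mu (fs n))%:E <= ftilde x),
  (0 <= fstar x)%R, (forall n, fs n x <= fs n.+1 x)%R, (forall n, 0 <= fs n x)%R &
  ereal_sup (range (fun n => (fs n x)%:E)) = ftilde x].
have HQ : {ae mu, forall x, Q x}.
  case: Hfs => H1 H2 H3.
  have := aeand (ae_foralln B1) (aeand f0 (aeand (ae_foralln H2)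
    (aeand (ae_foralln (fun n => (H1 n).2)) H3))).
  by apply: filterS => x [a [b [c [e f]]]]; split.
have [N [mN N0 HN]] := HQ.
have QD y : ~ N y -> Q y.
  by move=> Ny; apply: contrapT => nQ; apply: Ny; apply: HN.
have mA1 : measurable [set x | fstar x != 0%R].
  have -> : [set x | fstar x != 0%R] = [set x | (EFin \o fstar) x != 0].
    by apply/seteqP; split => x /=; rewrite eqe.
  rewrite -[X in measurable X]setTI.
  exact: emeasurable_neq measurableT ((measurable_EFinP _ _).2 (L1_meas Lfs)) 0.
have mA2 : measurable [set x | ftilde x < +oo].
  have := measurable_lte measurableT mF (measurable_cst +oo).
  by rewrite setTI.
have mA := measurableI _ _ mA1 mA2.
have [x [[fx0 Fxoo] Nx]] : exists x, ([set x | fstar x != 0%R] `&`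
    [set x | ftilde x < +oo]) x /\ ~ N x.
  apply: contrapT => H.
  have AN : [set x | fstar x != 0%R] `&` [set x | ftilde x < +oo] `<=` N.
    by move=> y Ay; apply: contrapT => Ny; apply: H; exists y.
  have := subset_measure0 mA mN AN N0.
  by move=> h; move: Apos; rewrite h ltxx.
have [c1 c2 _ _ _] := QD x Nx.
have fxpos : (0 < fstar x)%R by rewrite lt_neqAle eq_sym fx0.
have Ffin : ftilde x \is a fin_num by rewrite ge0_fin_numE.
pose M := ((fstar x)^-1 * fine (ftilde x))%R.
have bnd n : (L1norm mu (fs n) <= M)%R.
  rewrite /M ler_pdivlMl // -lee_fin fineK //; exact: c1.
apply/integrableP; split => //.
rewrite (eq_integral ftilde); last by move=> y _; rewrite gee0_abs.
rewrite (ge0_negligible_integral mN measurableT mF (fun y _ => F0 y) N0).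
have mD : measurable (setT `\` N) := measurableD measurableT mN.
rewrite (eq_integral (fun y => limn (fun n => (fs n y)%:E))); last first.
  move=> y; rewrite inE => -[_ Ny]; have [_ _ q3 _ q5] := QD y Ny.
  apply/esym/cvg_lim => //; rewrite -q5.
  apply: ereal_nondecreasing_cvgn => a b ab; rewrite lee_fin.
  exact: (nondecreasing_seqP _).1 q3 _ _ ab.
have mfs n : measurable_fun (setT `\` N) (fun y => (fs n y)%:E).
  apply: measurable_funTS; apply/measurable_EFinP; exact: L1_meas (fsL Hfs n).1.
have fs0 n y : (setT `\` N) y -> 0 <= (fs n y)%:E.
  by move=> [_ Ny]; have [_ _ _ q4 _] := QD y Ny; rewrite lee_fin.
have nd y : (setT `\` N) y -> {homo (fun n => (fs n y)%:E) : a b / (a <= b)%N >-> a <= b}.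
  move=> [_ Ny] a b ab; have [_ _ q3 _ _] := QD y Ny; rewrite lee_fin.
  exact: (nondecreasing_seqP _).1 q3 _ _ ab.
rewrite (monotone_convergence mu mD mfs fs0 nd).
apply: (le_lt_trans _ (ltry M)).
apply: lime_le.
  apply: ereal_nondecreasing_is_cvgn => a b ab; apply: ge0_le_integral => //.
    exact: fs0.
  by move=> y Dy; exact: (nd y Dy a b ab).
apply: nearW => n.
apply: (@le_trans _ _ (\int[mu]_(y in setT `\` N) (`|fs n y|)%R%:E)).
  apply: ge0_le_integral => //.
  - exact: fs0.
  - apply: measurable_funTS; exact: L1_abs_meas (fsL Hfs n).1.
  - by move=> y _; rewrite lee_fin ler_norm.
apply: (@le_trans _ _ (\int[mu]_y (`|fs n y|)%R%:E)).
  apply: ge0_subset_integral => //.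
  - exact: L1_abs_meas (fsL Hfs n).1.
rewrite -L1normE; first by rewrite lee_fin bnd.
exact: (fsL Hfs n).1.
Qed.
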